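(* The rectangle locus for two pairs of lines in the plane is either the empty set, a point, a line with an open segment missing, a line, a hyperbola, or the entire plane.
   Context: A pair of lines means two distinct lines; two pairs of lines are distinct pairs, possibly sharing one line. The rectangle locus of two pairs $L_1,L_3$ and $L_2,L_4$ is the set of points $p$ in the plane that are the midpoint both of a segment joining $L_1$ and $L_3$ and of a segment joining $L_2$ and $L_4$, these two segments having equal length (equivalently, centers of possibly degenerate rectangles whose diagonals join the lines of the respective pairs). A hyperbola here may be degenerate, i.e. a set $\{{\bf x}:({\bf x}-{\bf p})^TC({\bf x}-{\bf p})=k\}$ with $C$ real symmetric $2\times2$, $\det C<0$, and any $k\in\mathbb{R}$. *)

(* Defs.v *)
From HB Require Import structures.
From mathcomp Require Import all_boot all_order all_algebra.
From mathcomp Require Import boolp classical_sets reals.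
Set Implicit Arguments. Unset Strict Implicit. Unset Printing Implicit Defensive.
Import Order.TTheory GRing.Theory Num.Theory.
Local Open Scope ring_scope.
Local Open Scope classical_set_scope.

Section Plane.
Variable R : realType.
Notation pt := (R * R)%type.

Definition is_line (L : set pt) : Prop :=
  exists p v : pt, v != (0, 0) /\
    L = [set x | exists t : R, x = (p.1 + t * v.1, p.2 + t * v.2)].

Definition midpoint (a b : pt) : pt := ((a.1 + b.1) / 2, (a.2 + b.2) / 2).

(* squared Euclidean distance (equal lengths <-> equal squared lengths) *)
Definition dist2 (a b : pt) : R := (a.1 - b.1) ^+ 2 + (a.2 - b.2) ^+ 2.

Definition rectangle_locus (L1 L3 L2 L4 : set pt) : set pt :=
  [set p | exists a1 a3 a2 a4 : pt,
     [/\ L1 a1, L3 a3, L2 a2, L4 a4 &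
       [/\ p = midpoint a1 a3, p = midpoint a2 a4 & dist2 a1 a3 = dist2 a2 a4]]].

Definition line_minus_open_segment (a b : pt) : set pt :=
  [set x | exists t : R, x = (a.1 + t * (b.1 - a.1), a.2 + t * (b.2 - a.2))
                         /\ (t <= 0 \/ 1 <= t)].

(* possibly degenerate hyperbola {x | (x-q)^T C (x-q) = k}, C = [[a,b],[b,c]],
   det C = a c - b^2 < 0, k arbitrary *)
Definition is_hyperbola (S : set pt) : Prop :=
  exists (q : pt) (a b c k : R), a * c - b ^+ 2 < 0 /\
    S = [set x | a * (x.1 - q.1) ^+ 2 + 2 * b * (x.1 - q.1) * (x.2 - q.2)
                 + c * (x.2 - q.2) ^+ 2 = k].

End Plane.

(* Main.v *)
Require Import Defs.
From HB Require Import structures.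
From mathcomp Require Import all_boot all_order all_algebra.
From mathcomp Require Import boolp classical_sets reals.
From mathcomp Require Import ring lra.
Import Order.TTheory GRing.Theory Num.Theory.
Local Open Scope ring_scope.
Local Open Scope classical_set_scope.

Lemma sq_solve {R : realType} (a b c : R) : 0 < a -> 0 <= b ^+ 2 - a * c ->
  exists r, a * r ^+ 2 + 2 * b * r + c = 0.
Proof.
move=> a0 d0; exists ((- b + Num.sqrt (b ^+ 2 - a * c)) / a).
have hs := sqr_sqrtr d0.
set s := Num.sqrt _ in hs *.
have an : a != 0 by rewrite gt_eqF.
apply: (mulfI an); rewrite mulr0.
have -> : a * (a * ((- b + s) / a) ^+ 2 + 2 * b * ((- b + s) / a) + c)
   = s ^+ 2 - (b ^+ 2 - a * c) by field.
by rewrite hs subrr.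
Qed.

Lemma sq_solve_inv {R : realType} (a b c r : R) : 0 < a ->
  a * r ^+ 2 + 2 * b * r + c = 0 -> 0 <= b ^+ 2 - a * c.
Proof.
move=> a0 h.
have -> : b ^+ 2 - a * c = (a * r + b) ^+ 2 - a * (a * r ^+ 2 + 2 * b * r + c) by ring.
by rewrite h mulr0 subr0 sqr_ge0.
Qed.

Lemma quad_ge {R : realType} (A B C : R) : 0 < A -> 0 < B ^+ 2 - A * C ->
  exists u1 u2, u1 < u2 /\ forall u, (0 <= A * u ^+ 2 + 2 * B * u + C) <-> (u <= u1 \/ u2 <= u).
Proof.
move=> A0 d0.
have hs := sqr_sqrtr (ltW d0).
have s0 : 0 < Num.sqrt (B ^+ 2 - A * C) by rewrite sqrtr_gt0.
set s := Num.sqrt _ in hs s0 *.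
have an : A != 0 by rewrite gt_eqF.
exists ((- B - s) / A), ((- B + s) / A); split.
  by rewrite ltr_pM2r ?invr_gt0 //; lra.
move=> u.
have -> : A * u ^+ 2 + 2 * B * u + C = A * ((u - (- B - s) / A) * (u - (- B + s) / A)).
  apply: (mulfI an).
  have -> : C = (B ^+ 2 - s ^+ 2) / A by rewrite hs; field.
  by field.
rewrite pmulr_rge0 //.
set u1 := (- B - s) / A; set u2 := (- B + s) / A.
have u12 : u1 < u2 by rewrite ltr_pM2r ?invr_gt0 //; lra.
split.
  move=> h; case: (lerP u u1) => [|h1]; first by left.
  right; case: (lerP u2 u) => // h2.
  have : (u - u1) * (u - u2) < 0 by rewrite pmulr_rlt0; lra.
  lra.
case=> h.
  have -> : (u - u1) * (u - u2) = (u1 - u) * (u2 - u) by ring.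
  apply: mulr_ge0; lra.
apply: mulr_ge0; lra.
Qed.
Definition lineS {R : realType} (p v : R * R) : set (R * R) :=
  [set x | exists t : R, x = (p.1 + t * v.1, p.2 + t * v.2)].

Definition cr {R : realType} (a b : R * R) : R := a.1 * b.2 - a.2 * b.1.

Lemma nz_pos {R : realType} (v : R * R) : v != (0, 0) -> 0 < v.1 ^+ 2 + v.2 ^+ 2.
Proof.
case: v => a b /= h.
have : (a != 0) || (b != 0).
  by apply: contraNT h; rewrite negb_or !negbK => /andP[/eqP-> /eqP->].
case/orP => hn.
  have : 0 < a ^+ 2 by rewrite exprn_even_gt0.
  have := sqr_ge0 b; lra.
have : 0 < b ^+ 2 by rewrite exprn_even_gt0.
have := sqr_ge0 a; lra.
Qed.

Lemma pos_nz {R : realType} (v : R * R) : 0 < v.1 ^+ 2 + v.2 ^+ 2 -> v != (0, 0).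
Proof.
case: v => a b /= h; apply/eqP => -[ha hb]; move: h; rewrite ha hb; lra.
Qed.

Lemma line_eq_of {R : realType} (p v : R * R) (L : set (R * R)) :
  L = lineS p v -> v != (0,0) -> is_line L.
Proof. by move=> -> hv; exists p, v. Qed.

Lemma lineS_scale {R : realType} (p v : R * R) (k : R) : k != 0 ->
  lineS p (k * v.1, k * v.2) = lineS p v.
Proof.
move=> hk; apply: funext => x; apply: propext; split => -[t ->] /=.
  by exists (t * k); congr pair => /=; ring.
by exists (t / k); congr pair => /=; field.
Qed.

Lemma lineS_shift {R : realType} {p v q : R * R} : lineS p v q ->
  lineS q v = lineS p v.
Proof.
move=> [t0 ->]; apply: funext => x; apply: propext; split => -[t ->] /=.
  by exists (t0 + t); congr pair => /=; ring.
by exists (t - t0); congr pair => /=; ring.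
Qed.

Lemma par_scale {R : realType} {v w : R * R} : v != (0,0) -> w != (0,0) ->
  cr v w = 0 -> exists k : R, k != 0 /\ w = (k * v.1, k * v.2).
Proof.
case: v => a b; case: w => c d hv hw; rewrite /cr /= => h.
have hv' := nz_pos _ hv; have hw' := nz_pos _ hw; simpl in hv', hw'.
have hbc : b * c = a * d by lra.
have [ha|ha] := eqVneq a 0.
  have hb : b != 0 by apply/eqP => hb; move: hv'; rewrite ha hb; lra.
  have c0 : c = 0.
    by move: hbc; rewrite ha mul0r => /eqP; rewrite mulf_eq0 (negbTE hb) /= => /eqP.
  have dn : d != 0 by apply/eqP => d0; move: hw'; rewrite c0 d0; lra.
  exists (d / b); split; first by rewrite mulf_neq0 ?invr_eq0.
  by rewrite ha c0; congr pair => /=; field.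
have cn : c != 0.
  apply/eqP => c0; move: hbc; rewrite c0 mulr0 => /esym/eqP.
  rewrite mulf_eq0 (negbTE ha) /= => /eqP d0; move: hw'; rewrite c0 d0; lra.
exists (c / a); split; first by rewrite mulf_neq0 ?invr_eq0.
congr pair => /=; first by field.
by apply: (mulfI ha); rewrite -hbc; field.
Qed.
Definition pairrel {R : realType} (L1 L3 : set (R * R)) (x : R * R) (d : R) : Prop :=
  exists a1 a3, [/\ L1 a1, L3 a3, x = midpoint a1 a3 & d = dist2 a1 a3].

Lemma rl_eq {R : realType} (L1 L3 L2 L4 : set (R * R)) :
  rectangle_locus L1 L3 L2 L4 =
  [set x | exists d, pairrel L1 L3 x d /\ pairrel L2 L4 x d].
Proof.
apply: funext => x; apply: propext; split.
  move=> [a1 [a3 [a2 [a4 [h1 h3 h2 h4 [m1 m2 e]]]]]].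
  exists (dist2 a1 a3); split; first by exists a1, a3.
  by exists a2, a4.
move=> [d [[a1 [a3 [h1 h3 m1 e1]]] [a2 [a4 [h2 h4 m2 e2]]]]].
exists a1, a3, a2, a4; split => //; split => //.
by rewrite -e1 -e2.
Qed.

Lemma rl_sym {R : realType} (L1 L3 L2 L4 : set (R * R)) :
  rectangle_locus L1 L3 L2 L4 = rectangle_locus L2 L4 L1 L3.
Proof.
rewrite !rl_eq; apply: funext => x; apply: propext.
by split => -[d [h1 h2]]; exists d.
Qed.

Definition Kx {R : realType} (V1 V3 x : R * R) : R * R :=
  (cr x V3 * V1.1 - cr V1 x * V3.1, cr x V3 * V1.2 - cr V1 x * V3.2).
Definition c0 {R : realType} (P1 V1 P3 V3 : R * R) : R * R :=
  (cr V1 V3 * (P1.1 - P3.1) - (Kx V1 V3 (P1.1 + P3.1, P1.2 + P3.2)).1,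
   cr V1 V3 * (P1.2 - P3.2) - (Kx V1 V3 (P1.1 + P3.1, P1.2 + P3.2)).2).
Definition Nf {R : realType} (P1 V1 P3 V3 x : R * R) : R :=
  (2 * (Kx V1 V3 x).1 + (c0 P1 V1 P3 V3).1) ^+ 2 +
  (2 * (Kx V1 V3 x).2 + (c0 P1 V1 P3 V3).2) ^+ 2.

Lemma Nf_id {R : realType} (P1 V1 P3 V3 : R * R) (s t : R) :
  let a1 := (P1.1 + s * V1.1, P1.2 + s * V1.2) in
  let a3 := (P3.1 + t * V3.1, P3.2 + t * V3.2) in
  cr V1 V3 ^+ 2 * dist2 a1 a3 = Nf P1 V1 P3 V3 (midpoint a1 a3).
Proof.
move=> a1 a3; rewrite /Nf /c0 /Kx /cr /dist2 /midpoint /a1 /a3 /=.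
by field.
Qed.

Lemma pair_nonpar {R : realType} (P1 V1 P3 V3 x : R * R) (d : R) :
  cr V1 V3 != 0 ->
  pairrel (lineS P1 V1) (lineS P3 V3) x d <-> cr V1 V3 ^+ 2 * d = Nf P1 V1 P3 V3 x.
Proof.
move=> hD; split.
  by move=> [a1 [a3 [[s ->] [t ->] -> ->]]]; apply: Nf_id.
move=> hd.
set w := (2 * x.1 - P1.1 - P3.1, 2 * x.2 - P1.2 - P3.2).
set s := cr w V3 / cr V1 V3; set t := cr V1 w / cr V1 V3.
have hx : x = midpoint (P1.1 + s * V1.1, P1.2 + s * V1.2) (P3.1 + t * V3.1, P3.2 + t * V3.2).
  move: hD; rewrite /midpoint /s /t /w /cr /= => hD.
  by case: x {w s t hd} => x1 x2 /=; congr pair; field.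
exists (P1.1 + s * V1.1, P1.2 + s * V1.2), (P3.1 + t * V3.1, P3.2 + t * V3.2).
split => //; [by exists s | by exists t |].
have hD2 : cr V1 V3 ^+ 2 != 0 by rewrite expf_neq0.
apply: (mulfI hD2); rewrite hd Nf_id -hx //.
Qed.

Lemma pair_par {R : realType} (P2 P4 V x : R * R) (d : R) :
  pairrel (lineS P2 V) (lineS P4 V) x d <->
  exists u r, x = ((P2.1 + P4.1) / 2 + u * V.1, (P2.2 + P4.2) / 2 + u * V.2) /\
     d = (P2.1 - P4.1 + r * V.1) ^+ 2 + (P2.2 - P4.2 + r * V.2) ^+ 2.
Proof.
split.
  move=> [a1 [a3 [[s ->] [t ->] -> ->]]].
  exists ((s + t) / 2), (s - t); rewrite /midpoint /dist2 /=; split.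
    by congr pair => /=; field.
  by ring.
move=> [u [r [-> ->]]].
exists (P2.1 + (u + r / 2) * V.1, P2.2 + (u + r / 2) * V.2).
exists (P4.1 + (u - r / 2) * V.1, P4.2 + (u - r / 2) * V.2).
split; [by eexists | by eexists | |].
  by rewrite /midpoint; congr pair => /=; field.
by rewrite /dist2 /=; field.
Qed.
Definition concl {R : realType} (S : set (R * R)) : Prop :=
  S = set0 \/ (exists q : R * R, S = [set q]) \/
  (exists a b : R * R, a != b /\ S = line_minus_open_segment a b) \/
  is_line S \/ is_hyperbola S \/ S = setT.

Lemma pd_lemma {R : realType} (a b c a' b' c' dl : R) :
  0 < dl -> a * c - b ^+ 2 = dl -> a' * c' - b' ^+ 2 = dl -> 0 <= a -> 0 <= a' ->
  (a = a' /\ b = b' /\ c = c') \/ (a - a') * (c - c') - (b - b') ^+ 2 < 0.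
Proof.
move=> d0 e1 e2 a0 a0'.
have ap : 0 < a.
  rewrite lt_neqAle a0 andbT; apply/eqP => ha; move: e1; rewrite -ha mul0r.
  have := sqr_ge0 b; lra.
have ap' : 0 < a'.
  rewrite lt_neqAle a0' andbT; apply/eqP => ha; move: e2; rewrite -ha mul0r.
  have := sqr_ge0 b'; lra.
have key : a * a' * (- ((a - a') * (c - c') - (b - b') ^+ 2))
   = dl * (a - a') ^+ 2 + (a * b' - a' * b) ^+ 2
     + a ^+ 2 * (a' * c' - b' ^+ 2 - dl) + a' ^+ 2 * (a * c - b ^+ 2 - dl)
     + a * a' * ((dl - (a * c - b ^+ 2)) + (dl - (a' * c' - b' ^+ 2))) by ring.
rewrite e1 e2 !subrr !mulr0 !addr0 in key.
case: (ltP ((a - a') * (c - c') - (b - b') ^+ 2) 0) => h; [by right | left].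
have h1 : a * a' * (- ((a - a') * (c - c') - (b - b') ^+ 2)) <= 0.
  by apply: mulr_ge0_le0; [apply: mulr_ge0; apply: ltW | lra].
rewrite key in h1.
have s1 := sqr_ge0 (a - a'); have s2 := sqr_ge0 (a * b' - a' * b).
have t1 : dl * (a - a') ^+ 2 = 0.
  apply/eqP; rewrite eq_le; apply/andP; split; first by lra.
  by rewrite mulr_ge0 // ltW.
have t2 : (a * b' - a' * b) ^+ 2 = 0 by lra.
have ea : a = a'.
  move/eqP: t1; rewrite mulf_eq0 gt_eqF //= sqrf_eq0 subr_eq0 => /eqP //.
move/eqP: t2; rewrite sqrf_eq0 subr_eq0 -ea => /eqP t2.
have eb : b = b' by apply: (mulfI (lt0r_neq0 ap)); rewrite t2.
split => //; split => //.
apply: (mulfI (lt0r_neq0 ap)); move: e1 e2; rewrite -ea -eb; lra.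
Qed.

Lemma conic {R : realType} (a b c l m n : R) :
  (a = 0 /\ b = 0 /\ c = 0) \/ a * c - b ^+ 2 < 0 ->
  concl [set x : R * R | a * x.1 ^+ 2 + 2 * b * x.1 * x.2 + c * x.2 ^+ 2
                         + l * x.1 + m * x.2 + n = 0].
Proof.
case=> [[-> [-> ->]]|hd].
  have -> : [set x : R * R | 0 * x.1 ^+ 2 + 2 * 0 * x.1 * x.2 + 0 * x.2 ^+ 2
                         + l * x.1 + m * x.2 + n = 0]
          = [set x : R * R | l * x.1 + m * x.2 + n = 0].
    by apply: funext => x; apply: propext => /=; split => h; lra.
  have [hlm|hlm] := eqVneq (l ^+ 2 + m ^+ 2) 0.
    have hl : l = 0 by have := sqr_ge0 l; have := sqr_ge0 m; nra.
    have hm : m = 0 by have := sqr_ge0 l; have := sqr_ge0 m; nra.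
    rewrite hl hm.
    have [hn|hn] := eqVneq n 0.
      do 5 right; apply: funext => x; apply: propext; split => // _.
      by rewrite /= hn; lra.
    left; apply: funext => x; apply: propext; split => //=.
    move=> hn'; have hn0 : n = 0 by lra.
    by move: hn; rewrite hn0 eqxx.
  do 3 right; left.
  apply: (@line_eq_of _ (- n * l / (l ^+ 2 + m ^+ 2), - n * m / (l ^+ 2 + m ^+ 2)) (- m, l)).
    apply: funext => x; apply: propext; split => /=.
      move=> hx; exists ((- m * x.1 + l * x.2) / (l ^+ 2 + m ^+ 2)).
      have -> : n = - (l * x.1 + m * x.2) by lra.
      by case: x hx => x1 x2 /= hx; congr pair => /=; field.
    by move=> [t ->] /=; field.
  by apply: pos_nz => /=; rewrite sqrrN addrC lt_neqAle eq_sym hlm addr_ge0 ?sqr_ge0.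
do 4 right; left.
have hdn : a * c - b ^+ 2 != 0 by rewrite lt_eqF.
set q1 := (- l * c / 2 + m * b / 2) / (a * c - b ^+ 2).
set q2 := (- m * a / 2 + l * b / 2) / (a * c - b ^+ 2).
exists (q1, q2), a, b, c, (a * q1 ^+ 2 + 2 * b * q1 * q2 + c * q2 ^+ 2 - n); split => //.
apply: funext => x; apply: propext => /=.
have -> : a * (x.1 - q1) ^+ 2 + 2 * b * (x.1 - q1) * (x.2 - q2) + c * (x.2 - q2) ^+ 2
  = a * x.1 ^+ 2 + 2 * b * x.1 * x.2 + c * x.2 ^+ 2 + l * x.1 + m * x.2 + n
    + (a * q1 ^+ 2 + 2 * b * q1 * q2 + c * q2 ^+ 2 - n).
  by rewrite /q1 /q2; field.
split => h; first by rewrite h add0r.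
by apply/eqP; rewrite -(addrK (a * q1 ^+ 2 + 2 * b * q1 * q2 + c * q2 ^+ 2 - n) (_ + _ + _ + _ + _ + n)) h subrr.
Qed.
Lemma inter_lines {R : realType} (M V M' V' : R * R) : V != (0,0) -> V' != (0,0) ->
  concl [set x | lineS M V x /\ lineS M' V' x].
Proof.
move=> hV hV'.
have [hD|hD] := eqVneq (cr V V') 0.
  have [k [hk ->]] := par_scale hV hV' hD.
  rewrite lineS_scale //.
  have [[x0 [h1 h2]]|hn] := pselect (exists x0, lineS M V x0 /\ lineS M' V x0).
    do 3 right; left; apply: (@line_eq_of _ x0 V) => //.
    rewrite -(lineS_shift h1) -(lineS_shift h2).
    by apply: funext => x; apply: propext; split => [[]|] //.
  left; apply: funext => x; apply: propext; split => // hx.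
  by apply: hn; exists x.
right; left.
set u := cr (M'.1 - M.1, M'.2 - M.2) V' / cr V V'.
exists (M.1 + u * V.1, M.2 + u * V.2).
apply: funext => x; apply: propext; split => /=.
  move=> [[t ->] [t' e]].
  case: e => e1 e2.
  have ht : t * cr V V' = cr (M'.1 - M.1, M'.2 - M.2) V'.
    have f1 := congr1 (fun z => z * V'.2) e1.
    have f2 := congr1 (fun z => z * V'.1) e2.
    simpl in f1, f2; rewrite /cr /=; lra.
  have -> : t = u by rewrite /u -ht; field.
  by [].
move=> ->; split; first by exists u.
exists (cr (M'.1 - M.1, M'.2 - M.2) V / cr V V').
move: hD; rewrite /u /cr /= => hD.
by congr pair => /=; field.
Qed.

Lemma seg_lemma {R : realType} (M V : R * R) (A B C : R) : V != (0,0) -> 0 < A ->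
  concl [set x | exists u, x = (M.1 + u * V.1, M.2 + u * V.2) /\
                           0 <= A * u ^+ 2 + 2 * B * u + C].
Proof.
move=> hV hA.
have [hd|hd] := lerP (B ^+ 2 - A * C) 0.
  do 3 right; left; apply: (@line_eq_of _ M V) => //.
  apply: funext => x; apply: propext; split => [[u [-> _]]|[u ->]]; first by exists u.
  exists u; split => //.
  have : 0 <= A * (A * u ^+ 2 + 2 * B * u + C).
    have -> : A * (A * u ^+ 2 + 2 * B * u + C) = (A * u + B) ^+ 2 - (B ^+ 2 - A * C) by ring.
    by have := sqr_ge0 (A * u + B); lra.
  by rewrite pmulr_rge0.
have [u1 [u2 [h12 hu]]] := quad_ge _ _ _ hA hd.
right; right; left.
exists (M.1 + u1 * V.1, M.2 + u1 * V.2), (M.1 + u2 * V.1, M.2 + u2 * V.2); split.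
  apply/eqP => -[e1 e2].
  have hp := nz_pos _ hV.
  have f1 : (u2 - u1) * V.1 = 0 by lra.
  have f2 : (u2 - u1) * V.2 = 0 by lra.
  have hu0 : u2 - u1 != 0 by rewrite subr_eq0 gt_eqF.
  move/eqP: f1; rewrite mulf_eq0 (negbTE hu0) /= => /eqP g1.
  move/eqP: f2; rewrite mulf_eq0 (negbTE hu0) /= => /eqP g2.
  by move: hp; rewrite g1 g2; lra.
have hu0 : u2 - u1 != 0 by rewrite subr_eq0 gt_eqF.
apply: funext => x; apply: propext; split => /=.
  move=> [u [-> /hu h]].
  exists ((u - u1) / (u2 - u1)); split.
    by congr pair => /=; field.
  case: h => h; [left | right].
    by rewrite pmulr_lle0 ?invr_gt0 ?subr_gt0 // subr_le0.
  by rewrite ler_pdivlMr ?subr_gt0 // mul1r; lra.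
move=> [t [-> ht]].
exists (u1 + t * (u2 - u1)); split.
  by congr pair => /=; ring.
apply/hu; case: ht => ht; [left | right]; nra.
Qed.
Lemma Kx_nz {R : realType} (V1 V3 v : R * R) : cr V1 V3 != 0 -> v != (0,0) ->
  Kx V1 V3 v != (0,0).
Proof.
move=> hD hv; apply/eqP => hK.
have e1 : (Kx V1 V3 v).1 = 0 by rewrite hK.
have e2 : (Kx V1 V3 v).2 = 0 by rewrite hK.
have i1 : - (V1.2 * V3.1 + V1.1 * V3.2) * (Kx V1 V3 v).1 + 2 * V1.1 * V3.1 * (Kx V1 V3 v).2
   = - cr V1 V3 ^+ 2 * v.1 by rewrite /Kx /cr /=; ring.
have i2 : - 2 * V1.2 * V3.2 * (Kx V1 V3 v).1 + (V1.1 * V3.2 + V1.2 * V3.1) * (Kx V1 V3 v).2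
   = - cr V1 V3 ^+ 2 * v.2 by rewrite /Kx /cr /=; ring.
rewrite e1 e2 !mulr0 addr0 in i1 i2.
have hD2 : - cr V1 V3 ^+ 2 != 0 by rewrite oppr_eq0 expf_neq0.
have v1 : v.1 = 0 by apply: (mulfI hD2); rewrite -i1 mulr0.
have v2 : v.2 = 0 by apply: (mulfI hD2); rewrite -i2 mulr0.
by move: hv; clear hK i1 i2 e1 e2; case: v v1 v2 => a b /= -> ->; rewrite eqxx.
Qed.

Definition qa {R : realType} (V1 V3 : R * R) : R :=
  4 * ((Kx V1 V3 (1, 0)).1 ^+ 2 + (Kx V1 V3 (1, 0)).2 ^+ 2).
Definition qb {R : realType} (V1 V3 : R * R) : R :=
  4 * ((Kx V1 V3 (1, 0)).1 * (Kx V1 V3 (0, 1)).1 + (Kx V1 V3 (1, 0)).2 * (Kx V1 V3 (0, 1)).2).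
Definition qc {R : realType} (V1 V3 : R * R) : R :=
  4 * ((Kx V1 V3 (0, 1)).1 ^+ 2 + (Kx V1 V3 (0, 1)).2 ^+ 2).
Definition ql {R : realType} (P1 V1 P3 V3 : R * R) : R :=
  4 * ((Kx V1 V3 (1, 0)).1 * (c0 P1 V1 P3 V3).1 + (Kx V1 V3 (1, 0)).2 * (c0 P1 V1 P3 V3).2).
Definition qm {R : realType} (P1 V1 P3 V3 : R * R) : R :=
  4 * ((Kx V1 V3 (0, 1)).1 * (c0 P1 V1 P3 V3).1 + (Kx V1 V3 (0, 1)).2 * (c0 P1 V1 P3 V3).2).
Definition qn {R : realType} (P1 V1 P3 V3 : R * R) : R :=
  (c0 P1 V1 P3 V3).1 ^+ 2 + (c0 P1 V1 P3 V3).2 ^+ 2.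

Lemma Nf_poly {R : realType} (P1 V1 P3 V3 x : R * R) :
  Nf P1 V1 P3 V3 x = qa V1 V3 * x.1 ^+ 2 + 2 * qb V1 V3 * x.1 * x.2 + qc V1 V3 * x.2 ^+ 2
    + ql P1 V1 P3 V3 * x.1 + qm P1 V1 P3 V3 * x.2 + qn P1 V1 P3 V3.
Proof.
rewrite /Nf /qa /qb /qc /ql /qm /qn.
set c := c0 P1 V1 P3 V3; case: c => c1 c2 /=.
rewrite /Kx /cr /=; ring.
Qed.

Lemma q_det {R : realType} (V1 V3 : R * R) :
  qa V1 V3 * qc V1 V3 - qb V1 V3 ^+ 2 = 16 * cr V1 V3 ^+ 4.
Proof. rewrite /qa /qb /qc /Kx /cr /=; ring. Qed.

Lemma qa_ge0 {R : realType} (V1 V3 : R * R) : 0 <= qa V1 V3.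
Proof. by rewrite /qa mulr_ge0 ?addr_ge0 ?sqr_ge0. Qed.

Lemma caseA {R : realType} (P1 V1 P3 V3 P2 V2 P4 V4 : R * R) :
  cr V1 V3 != 0 -> cr V2 V4 != 0 ->
  concl (rectangle_locus (lineS P1 V1) (lineS P3 V3) (lineS P2 V2) (lineS P4 V4)).
Proof.
move=> h13 h24.
set D1 := cr V1 V3 ^+ 2; set D2 := cr V2 V4 ^+ 2.
have hD1 : D1 != 0 by rewrite expf_neq0.
have hD2 : D2 != 0 by rewrite expf_neq0.
have -> : rectangle_locus (lineS P1 V1) (lineS P3 V3) (lineS P2 V2) (lineS P4 V4) =
  [set x : R * R | (D2 * qa V1 V3 - D1 * qa V2 V4) * x.1 ^+ 2
     + 2 * (D2 * qb V1 V3 - D1 * qb V2 V4) * x.1 * x.2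
     + (D2 * qc V1 V3 - D1 * qc V2 V4) * x.2 ^+ 2
     + (D2 * ql P1 V1 P3 V3 - D1 * ql P2 V2 P4 V4) * x.1
     + (D2 * qm P1 V1 P3 V3 - D1 * qm P2 V2 P4 V4) * x.2
     + (D2 * qn P1 V1 P3 V3 - D1 * qn P2 V2 P4 V4) = 0].
  rewrite rl_eq; apply: funext => x; apply: propext => /=.
  have key : (D2 * Nf P1 V1 P3 V3 x = D1 * Nf P2 V2 P4 V4 x) <->
   ((D2 * qa V1 V3 - D1 * qa V2 V4) * x.1 ^+ 2
     + 2 * (D2 * qb V1 V3 - D1 * qb V2 V4) * x.1 * x.2
     + (D2 * qc V1 V3 - D1 * qc V2 V4) * x.2 ^+ 2
     + (D2 * ql P1 V1 P3 V3 - D1 * ql P2 V2 P4 V4) * x.1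
     + (D2 * qm P1 V1 P3 V3 - D1 * qm P2 V2 P4 V4) * x.2
     + (D2 * qn P1 V1 P3 V3 - D1 * qn P2 V2 P4 V4) = 0).
    rewrite !Nf_poly; split => h.
      by rewrite -[LHS]subr0 -(subrr (D1 * (qa V2 V4 * x.1 ^+ 2 + 2 * qb V2 V4 * x.1 * x.2 +
        qc V2 V4 * x.2 ^+ 2 + ql P2 V2 P4 V4 * x.1 + qm P2 V2 P4 V4 * x.2 + qn P2 V2 P4 V4))) -{1}h; ring.
    apply/eqP; rewrite -subr_eq0; apply/eqP; rewrite -[RHS]h; ring.
  rewrite -key; split.
    move=> [d [/(pair_nonpar _ _ _ _ _ _ h13) e1 /(pair_nonpar _ _ _ _ _ _ h24) e2]].
    by rewrite /D1 /D2 -e1 -e2; ring.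
  move=> e; exists (Nf P1 V1 P3 V3 x / D1); split.
    by apply/(pair_nonpar _ _ _ _ _ _ h13); rewrite -/D1; field.
  apply/(pair_nonpar _ _ _ _ _ _ h24); rewrite -/D2.
  have -> : D2 * (Nf P1 V1 P3 V3 x / D1) = (D2 * Nf P1 V1 P3 V3 x) / D1 by field.
  by rewrite e; field.
apply: conic.
have hdl : 0 < 16 * cr V1 V3 ^+ 4 * cr V2 V4 ^+ 4.
  by apply: mulr_gt0; [apply: mulr_gt0|]; rewrite ?exprn_even_gt0.
case: (pd_lemma (D2 * qa V1 V3) (D2 * qb V1 V3) (D2 * qc V1 V3)
          (D1 * qa V2 V4) (D1 * qb V2 V4) (D1 * qc V2 V4) _ hdl).
- have -> : D2 * qa V1 V3 * (D2 * qc V1 V3) - (D2 * qb V1 V3) ^+ 2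
     = D2 ^+ 2 * (qa V1 V3 * qc V1 V3 - qb V1 V3 ^+ 2) by ring.
  by rewrite q_det /D2; ring.
- have -> : D1 * qa V2 V4 * (D1 * qc V2 V4) - (D1 * qb V2 V4) ^+ 2
     = D1 ^+ 2 * (qa V2 V4 * qc V2 V4 - qb V2 V4 ^+ 2) by ring.
  by rewrite q_det /D1; ring.
- by rewrite mulr_ge0 ?qa_ge0 // /D2 sqr_ge0.
- by rewrite mulr_ge0 ?qa_ge0 // /D1 sqr_ge0.
- by move=> [-> [-> ->]]; left; rewrite !subrr.
- by right.
Qed.
Lemma Nf_line {R : realType} (P1 V1 P3 V3 M V : R * R) (u : R) :
  Nf P1 V1 P3 V3 (M.1 + u * V.1, M.2 + u * V.2) =
  (2 * u * (Kx V1 V3 V).1 + (2 * (Kx V1 V3 M).1 + (c0 P1 V1 P3 V3).1)) ^+ 2 +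
  (2 * u * (Kx V1 V3 V).2 + (2 * (Kx V1 V3 M).2 + (c0 P1 V1 P3 V3).2)) ^+ 2.
Proof.
rewrite /Nf; set c := c0 P1 V1 P3 V3; case: c => c1 c2 /=.
rewrite /Kx /cr /=; ring.
Qed.

Lemma caseB {R : realType} (P1 V1 P3 V3 P2 P4 V : R * R) :
  cr V1 V3 != 0 -> V != (0,0) ->
  concl (rectangle_locus (lineS P1 V1) (lineS P3 V3) (lineS P2 V) (lineS P4 V)).
Proof.
move=> h13 hV.
set M := ((P2.1 + P4.1) / 2, (P2.2 + P4.2) / 2).
set E := (P2.1 - P4.1, P2.2 - P4.2).
set Dq := cr V1 V3 ^+ 2.
set w := Kx V1 V3 V.
set z := (2 * (Kx V1 V3 M).1 + (c0 P1 V1 P3 V3).1, 2 * (Kx V1 V3 M).2 + (c0 P1 V1 P3 V3).2).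
set nV := V.1 ^+ 2 + V.2 ^+ 2.
set EV := E.1 * V.1 + E.2 * V.2.
set nE := E.1 ^+ 2 + E.2 ^+ 2.
have hnV : 0 < nV by apply: nz_pos.
have hDq : 0 < Dq by rewrite /Dq exprn_even_gt0.
have hw : 0 < w.1 ^+ 2 + w.2 ^+ 2 by apply: nz_pos; apply: Kx_nz.
set A := Dq * nV * (4 * (w.1 ^+ 2 + w.2 ^+ 2)).
set B := Dq * nV * (2 * (w.1 * z.1 + w.2 * z.2)).
set C := Dq * nV * (z.1 ^+ 2 + z.2 ^+ 2) + Dq ^+ 2 * (EV ^+ 2 - nV * nE).
have hA : 0 < A by rewrite /A; apply: mulr_gt0; [apply: mulr_gt0 | apply: mulr_gt0].
have iden : forall u, (Dq * EV) ^+ 2 - (Dq * nV) * (Dq * nE - Nf P1 V1 P3 V3 (M.1 + u * V.1, M.2 + u * V.2))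
   = A * u ^+ 2 + 2 * B * u + C.
  move=> u; rewrite Nf_line -/w /A /B /C /z /=; ring.
have hq : forall r d, d = (P2.1 - P4.1 + r * V.1) ^+ 2 + (P2.2 - P4.2 + r * V.2) ^+ 2 ->
   forall N, (Dq * nV) * r ^+ 2 + 2 * (Dq * EV) * r + (Dq * nE - N) = Dq * d - N.
  by move=> r d -> N; rewrite /nV /EV /nE /E /=; ring.
have -> : rectangle_locus (lineS P1 V1) (lineS P3 V3) (lineS P2 V) (lineS P4 V) =
  [set x | exists u, x = (M.1 + u * V.1, M.2 + u * V.2) /\ 0 <= A * u ^+ 2 + 2 * B * u + C].
  rewrite rl_eq; apply: funext => x; apply: propext => /=; split.
    move=> [d [/(pair_nonpar _ _ _ _ _ _ h13) e1 /pair_par [u [r [ex ed]]]]].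
    exists u; split; first by rewrite ex.
    rewrite -iden; apply: (@sq_solve_inv _ _ _ _ r); first by rewrite mulr_gt0.
    by rewrite (hq r d ed) -/Dq e1 ex subrr.
  move=> [u [ex hu]]; rewrite -iden in hu.
  have [r hr] := sq_solve _ _ _ (mulr_gt0 hDq hnV) hu.
  exists ((P2.1 - P4.1 + r * V.1) ^+ 2 + (P2.2 - P4.2 + r * V.2) ^+ 2); split.
    apply/(pair_nonpar _ _ _ _ _ _ h13); rewrite -/Dq.
    move: hr; rewrite (hq r _ erefl) ex => /eqP; rewrite subr_eq0 => /eqP.
    by [].
  by apply/pair_par; exists u, r; split.
exact: seg_lemma.
Qed.

Lemma caseC {R : realType} (P1 P3 V P2 P4 W : R * R) :
  V != (0,0) -> W != (0,0) ->
  concl (rectangle_locus (lineS P1 V) (lineS P3 V) (lineS P2 W) (lineS P4 W)).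
Proof.
move=> hV hW.
have hsol : forall (E U : R * R) (T : R), U != (0,0) -> E.1 ^+ 2 + E.2 ^+ 2 <= T ->
    exists r, T = (E.1 + r * U.1) ^+ 2 + (E.2 + r * U.2) ^+ 2.
  move=> E U T hU hT.
  have hp := nz_pos _ hU.
  have [r hr] := @sq_solve _ (U.1 ^+ 2 + U.2 ^+ 2) (E.1 * U.1 + E.2 * U.2)
      (E.1 ^+ 2 + E.2 ^+ 2 - T) hp
      ltac:(have := sqr_ge0 (E.1 * U.1 + E.2 * U.2); nra).
  exists r; apply/eqP; rewrite eq_sym -subr_eq0; apply/eqP; rewrite -[RHS]hr; ring.
have -> : rectangle_locus (lineS P1 V) (lineS P3 V) (lineS P2 W) (lineS P4 W) =
   [set x | lineS ((P1.1 + P3.1) / 2, (P1.2 + P3.2) / 2) V x /\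
            lineS ((P2.1 + P4.1) / 2, (P2.2 + P4.2) / 2) W x].
  rewrite rl_eq; apply: funext => x; apply: propext => /=; split.
    move=> [d [/pair_par [u [r [ex _]]] /pair_par [u' [r' [ex' _]]]]].
    by split; [exists u | exists u'].
  move=> [[u ex] [u' ex']].
  set T := (P1.1 - P3.1) ^+ 2 + (P1.2 - P3.2) ^+ 2 + ((P2.1 - P4.1) ^+ 2 + (P2.2 - P4.2) ^+ 2).
  have [r hr] := hsol (P1.1 - P3.1, P1.2 - P3.2) V T hV
     ltac:(rewrite /T /=; have := sqr_ge0 (P2.1 - P4.1); have := sqr_ge0 (P2.2 - P4.2); lra).
  have [r' hr'] := hsol (P2.1 - P4.1, P2.2 - P4.2) W T hW
     ltac:(rewrite /T /=; have := sqr_ge0 (P1.1 - P3.1); have := sqr_ge0 (P1.2 - P3.2); lra).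
  exists T; split; apply/pair_par.
    by exists u, r.
  by exists u', r'.
exact: inter_lines.
Qed.
Lemma is_lineP {R : realType} (L : set (R * R)) :
  is_line L -> exists p v, v != (0,0) /\ L = lineS p v.
Proof. by move=> [p [v [hv ->]]]; exists p, v. Qed.

Theorem corollary4p9 (R : realType) (L1 L3 L2 L4 : set (R * R)) :
  is_line L1 -> is_line L3 -> is_line L2 -> is_line L4 ->
  L1 <> L3 -> L2 <> L4 ->
  ~ ((L1 = L2 /\ L3 = L4) \/ (L1 = L4 /\ L3 = L2)) ->
  let S := rectangle_locus L1 L3 L2 L4 in
  S = set0 \/ (exists q : R * R, S = [set q]) \/
  (exists a b : R * R, a != b /\ S = line_minus_open_segment a b) \/
  is_line S \/ is_hyperbola S \/ S = setT.
Proof.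
move=> /is_lineP [P1 [V1 [h1 ->]]] /is_lineP [P3 [V3 [h3 ->]]].
move=> /is_lineP [P2 [V2 [h2 ->]]] /is_lineP [P4 [V4 [h4 ->]]] _ _ _ S.
rewrite /S; clear S.
have [D13|D13] := eqVneq (cr V1 V3) 0; have [D24|D24] := eqVneq (cr V2 V4) 0.
- have [k [hk ->]] := par_scale h1 h3 D13.
  have [k' [hk' ->]] := par_scale h2 h4 D24.
  rewrite !lineS_scale //.
  exact: caseC.
- have [k [hk ->]] := par_scale h1 h3 D13.
  rewrite lineS_scale // rl_sym.
  exact: caseB.
- have [k' [hk' ->]] := par_scale h2 h4 D24.
  rewrite lineS_scale //.
  exact: caseB.
- exact: caseA.
Qed.
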